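(* Let $n\ge 2$. Every matrix in the interior of the cone $\mathcal{CP}_n$ (interior taken in the space $\mathcal S_n$ of real symmetric $n\times n$ matrices) has infinitely many CP factorizations.
   Context: A symmetric $n\times n$ matrix $A$ is completely positive if $A=BB^T$ for some entrywise nonnegative $n\times k$ matrix $B$; such an equality is a CP factorization of $A$. $\mathcal{CP}_n$ denotes the convex cone of $n\times n$ completely positive matrices. Only CP factorizations in which the columns of $B$ are pairwise linearly independent are considered, and two CP factorizations $A=BB^T=CC^T$ are considered equal if $C=BP$ for a permutation matrix $P$. (Known fact, which may be used: the interior of $\mathcal{CP}_n$ consists exactly of the nonsingular matrices $A$ having a CP factorization $A=BB^T$ in which at least one column of $B$ is entrywise positive.) *)

(* Defs.v *)
From HB Require Import structures.
From mathcomp Require Import all_boot all_order all_algebra all_fingroup.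
From mathcomp Require Import reals.
Set Implicit Arguments. Unset Strict Implicit. Unset Printing Implicit Defensive.
Import Order.TTheory GRing.Theory Num.Theory.
Local Open Scope ring_scope.

Definition nonneg_mx (R : realType) (m k : nat) (B : 'M[R]_(m, k)) : Prop :=
  forall i j, 0 <= B i j.

Definition CP_factorization (R : realType) (n k : nat)
  (A : 'M[R]_n) (B : 'M[R]_(n, k)) : Prop :=
  nonneg_mx B /\ A = B *m B^T.

Definition pairwise_lin_indep_cols (R : realType) (n k : nat)
  (B : 'M[R]_(n, k)) : Prop :=
  forall i j : 'I_k, i != j ->
    forall a b : R, a *: col i B + b *: col j B = 0 -> a = 0 /\ b = 0.

Definition completely_positive (R : realType) (n : nat) (A : 'M[R]_n) : Prop :=
  exists k (B : 'M[R]_(n, k)), CP_factorization A B.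

(* A lies in the interior of CP_n, taken in the space S_n of real
   symmetric n x n matrices (topology of the max-entry norm; all norms
   on the finite-dimensional space S_n are equivalent). *)
Definition in_interior_CP (R : realType) (n : nat) (A : 'M[R]_n) : Prop :=
  A^T = A /\ completely_positive A /\
  exists2 eps : R, 0 < eps &
    forall M : 'M[R]_n, M^T = M ->
      (forall i j, `|M i j - A i j| < eps) -> completely_positive M.

Definition factor (R : realType) (n : nat) := {k : nat & 'M[R]_(n, k)}.

Definition factor_equiv (R : realType) (n : nat) (F G : factor R n) : Prop :=
  exists e : projT1 F = projT1 G,
    exists s : 'S_(projT1 G),
      projT2 G = castmx (erefl n, e) (projT2 F) *m perm_mx s.

(* Main.v *)
Require Import Defs.
From HB Require Import structures.
From mathcomp Require Import all_boot all_order all_algebra all_fingroup.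
From mathcomp Require Import reals.
From Stdlib Require Import ClassicalEpsilon.
From mathcomp Require Import ring lra.
Import Order.TTheory GRing.Theory Num.Theory.
Local Open Scope ring_scope.
Set Implicit Arguments. Unset Strict Implicit.

Definition nnv {R : realType} {n : nat} (v : 'cV[R]_n) : Prop := forall i, 0 <= v i 0.
Definition ssum {R : realType} {n : nat} (v : 'cV[R]_n) : R := \sum_i v i 0.
Definition nd {R : realType} {n : nat} (v : 'cV[R]_n) : 'cV[R]_n := (ssum v)^-1 *: v.
Definition outer {R : realType} {n : nat} (v : 'cV[R]_n) : 'M[R]_n :=
  \matrix_(a, b) (v a 0 * v b 0).

Lemma outerE (R : realType) n (v : 'cV[R]_n) a b : outer v a b = v a 0 * v b 0.
Proof. by rewrite /outer mxE. Qed.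

Lemma ssumZ (R : realType) n (c : R) (v : 'cV[R]_n) : ssum (c *: v) = c * ssum v.
Proof. by rewrite /ssum mulr_sumr; apply: eq_bigr => i _; rewrite mxE. Qed.

Lemma ssum_gt0 (R : realType) n (v : 'cV[R]_n) : nnv v -> v != 0 -> 0 < ssum v.
Proof.
move=> hv vn0; rewrite lt0r sumr_ge0 ?andbT //; apply/eqP => h.
move/eqP: vn0; apply; apply/matrixP => i j; rewrite ord1 mxE.
by apply: (psumr_eq0P _ h).
Qed.

Lemma nd_scale (R : realType) n (v : 'cV[R]_n) : ssum v != 0 -> v = ssum v *: nd v.
Proof. by move=> h; rewrite /nd scalerA divff // scale1r. Qed.

Lemma ssum_nd (R : realType) n (v : 'cV[R]_n) : ssum v != 0 -> ssum (nd v) = 1.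
Proof. by move=> h; rewrite /nd ssumZ mulVf. Qed.

Lemma ndZ (R : realType) n (c : R) (v : 'cV[R]_n) : c != 0 -> nd (c *: v) = nd v.
Proof.
move=> hc; rewrite /nd ssumZ scalerA; have [->|h] := eqVneq (ssum v) 0.
  by rewrite mulr0 invr0 mul0r !scale0r.
by rewrite invfM mulrAC mulVf ?mul1r.
Qed.

Lemma outerZ (R : realType) n (c : R) (v : 'cV[R]_n) : outer (c *: v) = c ^+ 2 *: outer v.
Proof. apply/matrixP => a b; rewrite outerE [RHS]mxE outerE !mxE expr2.
by rewrite -!mulrA; congr (_ * _); rewrite mulrCA. Qed.

Lemma mul_tr_sum (R : realType) n k (B : 'M[R]_(n, k)) :
  B *m B^T = \sum_(j < k) outer (col j B).
Proof.
apply/matrixP => a b; rewrite summxE mxE; apply: eq_bigr => j _.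
by rewrite outerE !mxE.
Qed.

Lemma ssumD (R : realType) n (u w : 'cV[R]_n) : ssum (u + w) = ssum u + ssum w.
Proof. by rewrite /ssum -big_split; apply: eq_bigr => i _; rewrite mxE. Qed.

Lemma ssum0 (R : realType) n : ssum (0 : 'cV[R]_n) = 0.
Proof. by rewrite /ssum big1 // => i _; rewrite mxE. Qed.

Lemma outer0 (R : realType) n : outer (0 : 'cV[R]_n) = 0.
Proof. by apply/matrixP => a b; rewrite /outer !mxE mul0r. Qed.

Lemma normalize (R : realType) n (s : seq 'cV[R]_n) : (forall v, v \in s -> nnv v) ->
 exists k (B : 'M[R]_(n,k)), nonneg_mx B /\ B *m B^T = \sum_(v <- s) outer v /\
   pairwise_lin_indep_cols B /\
   (forall v, v \in s -> v != 0 -> exists j, nd (col j B) = nd v).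
Proof.
move=> hs.
set s0 := [seq v <- s | v != 0].
set D := undup [seq nd v | v <- s0].
set al := fun d => \sum_(v <- s0 | nd v == d) ssum v ^+ 2.
set cols := [seq Num.sqrt (al d) *: d | d <- D].
have hs0 : forall v, v \in s0 -> [/\ v \in s, v != 0, nnv v & 0 < ssum v].
  move=> v; rewrite mem_filter => /andP[vn0 vs]; split => //; first exact: hs.
  by apply: ssum_gt0 => //; apply: hs.
have hD : forall d, d \in D -> exists2 v, v \in s0 & d = nd v.
  by move=> d; rewrite mem_undup => /mapP.
have alpos : forall d, d \in D -> 0 < al d.
  move=> d /hD [v vs0 ->]; rewrite /al (big_rem v vs0) eqxx.
  have [_ _ _ h] := hs0 v vs0.
  have h2 : 0 <= \sum_(y <- rem v s0 | nd y == nd v) ssum y ^+ 2.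
    by apply: sumr_ge0 => i _; apply: sqr_ge0.
  have h3 : 0 < ssum v ^+ 2 by apply: exprn_gt0.
  exact: (ltr_wpDr h2 h3).
have ssD : forall d, d \in D -> ssum d = 1.
  move=> d /hD [v vs0 ->]; apply: ssum_nd; have [_ _ _ h] := hs0 v vs0.
  by rewrite gt_eqF.
have uD : uniq D by apply: undup_uniq.
set B := \matrix_(i < n, j < size D) (cols`_j) i 0.
have colE : forall j : 'I_(size D), col j B = Num.sqrt (al D`_j) *: D`_j.
  by move=> j; apply/matrixP => i k; rewrite ord1 !mxE /cols (nth_map 0) // mxE.
exists (size D), B; split; last split; last split.
- move=> i j; have := congr1 (fun M : 'cV[R]_n => M i 0) (colE j); rewrite /= !mxE => ->.
  have jD : D`_j \in D by apply: mem_nth.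
  have [v vs0 ->] := hD _ jD; have [_ _ nv h] := hs0 v vs0.
  rewrite mxE; apply: mulr_ge0; first exact: sqrtr_ge0.
  by apply: mulr_ge0 => //; rewrite invr_ge0 ltW.
- rewrite mul_tr_sum.
  transitivity (\sum_(d <- D) outer (Num.sqrt (al d) *: d)).
    by rewrite (big_nth 0) big_mkord; apply: eq_bigr => j _; rewrite colE.
  transitivity (\sum_(v <- s0) outer v); last first.
    rewrite big_filter big_mkcond /=; apply: eq_bigr => v _.
    by case: eqP => [->|//]; rewrite outer0.
  transitivity (\sum_(v <- s0) \sum_(d <- D) (if d == nd v then ssum v ^+ 2 *: outer d else 0)); last first.
    apply: eq_big_seq => v vs0.
    have ndD : nd v \in D by rewrite mem_undup; apply: map_f.
    rewrite (bigD1_seq (nd v)) //= eqxx big1 ?addr0; last first.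
      by move=> d /negbTE ->.
    have [_ _ _ h] := hs0 v vs0.
    by rewrite -outerZ -nd_scale // gt_eqF.
  rewrite exchange_big; apply: eq_big_seq => d dD.
  rewrite outerZ sqr_sqrtr; last by apply: ltW; apply: alpos.
  rewrite /al scaler_suml big_mkcond; apply: eq_bigr => v _.
  by rewrite eq_sym; case: eqP.
- move=> i j ij a b; rewrite !colE !scalerA => h.
  have iD : D`_i \in D by apply: mem_nth.
  have jD : D`_j \in D by apply: mem_nth.
  have dij : D`_i != D`_j by rewrite nth_uniq.
  have ci : Num.sqrt (al D`_i) != 0 by rewrite gt_eqF // sqrtr_gt0 alpos.
  have cj : Num.sqrt (al D`_j) != 0 by rewrite gt_eqF // sqrtr_gt0 alpos.
  set x := a * _ in h; set y := b * _ in h.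
  have hxy : x + y = 0.
    by have := congr1 ssum h; rewrite ssumD !ssumZ ssum0 !ssD // !mulr1.
  have hy : y = - x by lra.
  move: h; rewrite hy scaleNr -scalerBr => /eqP; rewrite scaler_eq0 subr_eq0 (negbTE dij) orbF.
  move=> /eqP x0; move: hy; rewrite x0 oppr0 => /eqP; rewrite mulf_eq0 (negbTE cj) orbF => /eqP ->.
  by move/eqP: x0; rewrite mulf_eq0 (negbTE ci) orbF => /eqP ->.
- move=> v vs vn0.
  have vs0 : v \in s0 by rewrite mem_filter vn0.
  have ndD : nd v \in D by rewrite mem_undup; apply: map_f.
  have hi : (index (nd v) D < size D)%N by rewrite index_mem.
  exists (Ordinal hi) => /=.
  rewrite colE /= nth_index // ndZ; last by rewrite gt_eqF // sqrtr_gt0 alpos.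
  by rewrite /nd (@ssum_nd _ _ v) ?invr1 ?scale1r //; have [_ _ _ h] := hs0 v vs0; rewrite gt_eqF.
Qed.

Definition uvec (R : realType) (n t : nat) : 'cV[R]_n :=
  \col_i (if val i == 0%N then 1 else (t.+1)%:R).

Lemma uvec_nn (R : realType) n t : nnv (uvec R n t).
Proof. by move=> i; rewrite mxE; case: ifP => _ //; rewrite ler0n. Qed.

Lemma uvec_le (R : realType) n t i : uvec R n t i 0 <= (t.+1)%:R.
Proof. by rewrite mxE; case: ifP => _ //; rewrite ler1n. Qed.

Lemma uvec_inj (R : realType) n (hn : (2 <= n)%N) t t' :
  nd (uvec R n t) = nd (uvec R n t') -> t = t'.
Proof.
have h0 : (0 < n)%N by apply: leq_trans hn.
pose i0 := Ordinal h0; pose i1 := Ordinal hn.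
have key : forall t, nd (uvec R n t) i1 0 = (t.+1)%:R * nd (uvec R n t) i0 0.
  by move=> t0; rewrite !mxE /= mulr1 mulrC.
have pos : forall t, 0 < nd (uvec R n t) i0 0.
  move=> t0; rewrite !mxE /= mulr1 invr_gt0; apply: ssum_gt0; first exact: uvec_nn.
  apply/negP => /eqP h; have := congr1 (fun M : 'cV[R]_n => M i0 0) h.
  by rewrite !mxE /= => /eqP; rewrite oner_eq0.
move=> e; have := key t'; rewrite -e key => /mulIf h.
have := h (lt0r_neq0 (pos t)); move/eqP; rewrite eqr_nat eqSS => /eqP.
by [].
Qed.

Lemma pick_t (R : realType) n (hn : (2 <= n)%N) (L : seq 'cV[R]_n) :
  exists t, nd (uvec R n t) \notin L.
Proof.
set S := [seq nd (uvec R n t) | t <- iota 0 (size L).+1].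
have uS : uniq S.
  rewrite map_inj_in_uniq ?iota_uniq // => x y _ _; exact: uvec_inj.
have : ~~ all (fun x => x \in L) S.
  apply/negP => /allP hall; have := uniq_leq_size uS hall.
  by rewrite size_map size_iota ltnn.
case/allPn => x /mapP [t _ ->] ht; by exists t.
Qed.

Lemma step (R : realType) n (hn : (2 <= n)%N) (A : 'M[R]_n) (hA : in_interior_CP A)
  (L : seq 'cV[R]_n) :
  exists F : factor R n,
    (CP_factorization A (projT2 F) /\ pairwise_lin_indep_cols (projT2 F)) /\
    exists j, nd (col j (projT2 F)) \notin L.
Proof.
have [t ht] := pick_t hn L.
set u := uvec R n t.
have ht' : nd u \notin L := ht.
have unn : nnv u := uvec_nn R t.
have ule : forall i, u i 0 <= (t.+1)%:R := fun i => uvec_le R t i.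
have un0 : u != 0.
  have h0 : (0 < n)%N by apply: leq_trans hn.
  apply/negP => /eqP h; have := congr1 (fun M : 'cV[R]_n => M (Ordinal h0) 0) h.
  by rewrite !mxE /= => /eqP; rewrite oner_eq0.
clearbody u.
case: hA => hsym [_ [eps he hM]].
set c : R := (t.+1)%:R.
have c0 : 0 <= c by rewrite ler0n.
set dl := eps / (c ^+ 2 + 1).
have hc1 : 0 < c ^+ 2 + 1 by rewrite ltr_pwDr // sqr_ge0.
have dl0 : 0 < dl by rewrite divr_gt0.
have epsE : eps = dl * (c ^+ 2 + 1) by rewrite /dl divfK // gt_eqF.
set M := A - dl *: outer u.
have hMs : M^T = M.
  apply/matrixP => a b; rewrite !mxE.
  have := congr1 (fun X : 'M[R]_n => X a b) hsym; rewrite mxE => ->.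
  by rewrite [X in dl * X]mulrC.
have hMb : forall i j, `|M i j - A i j| < eps.
  move=> i j; rewrite !mxE addrAC subrr add0r normrN.
  have ui := unn i; have uj := unn j.
  have ui' := ule i; have uj' := ule j.
  rewrite ger0_norm; last by apply: mulr_ge0; [apply: ltW|apply: mulr_ge0].
  rewrite epsE ltr_pM2l //.
  have : u i 0 * u j 0 <= c * c by apply: ler_pM.
  by rewrite expr2 => h; apply: le_lt_trans h _; rewrite ltrDl.
have [k0 [B0 [nnB0 hB0]]] := hM M hMs hMb.
set s := [seq col j B0 | j <- index_enum 'I_k0] ++ [:: Num.sqrt dl *: u].
have hs : forall v, v \in s -> nnv v.
  move=> v; rewrite mem_cat => /orP [/mapP [j _ ->]|].
    by move=> i; rewrite mxE; apply: nnB0.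
  rewrite mem_seq1 => /eqP -> i; rewrite mxE; apply: mulr_ge0.
    exact: sqrtr_ge0.
  exact: unn.
have [k [Bm [nnB [eqB [pw dir]]]]] := normalize hs.
have sqd : Num.sqrt dl != 0 by rewrite gt_eqF // sqrtr_gt0.
have [j hj] : exists j, nd (col j Bm) = nd (Num.sqrt dl *: u).
  apply: dir; first by rewrite mem_cat mem_seq1 eqxx orbT.
  by rewrite scaler_eq0 negb_or sqd.
exists (existT _ k Bm) => /=; split; last by exists j; rewrite hj ndZ.
split => //; split => //.
rewrite eqB big_cat big_seq1 big_map /= -mul_tr_sum -hB0 outerZ sqr_sqrtr ?ltW //.
by rewrite /M subrK.
Qed.

Lemma equiv_cols (R : realType) n (F G : factor R n) : factor_equiv F G ->
  (forall j, exists i, col j (projT2 G) = col i (projT2 F)) /\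
  (forall i, exists j, col i (projT2 F) = col j (projT2 G)).
Proof.
case: F => k B; case: G => k' B'; rewrite /factor_equiv /= => -[e]; subst k'; case=> sg ->.
rewrite castmx_id -[sg]invgK -col_permE.
split.
  move=> j; exists ((sg^-1)%g j); apply/matrixP => a b; by rewrite !mxE.
move=> i; exists (sg i); apply/matrixP => a b; by rewrite !mxE permK.
Qed.

Definition dirs (R : realType) n (F : factor R n) : seq 'cV[R]_n :=
  [seq nd (col j (projT2 F)) | j <- index_enum 'I_(projT1 F)].

Lemma in_dirs (R : realType) n (F : factor R n) j : nd (col j (projT2 F)) \in dirs F.
Proof. by apply: map_f; rewrite mem_index_enum. Qed.

Theorem corollary3p3 (R : realType) (n : nat) (hn : (2 <= n)%N)
  (A : 'M[R]_n) (hA : in_interior_CP A) :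
  exists f : nat -> factor R n,
    (forall t, CP_factorization A (projT2 (f t)) /\
               pairwise_lin_indep_cols (projT2 (f t))) /\
    (forall s t, s <> t -> ~ factor_equiv (f s) (f t)).
Proof.
have st := step hn hA.
pose G L := proj1_sig (constructive_indefinite_description _ (st L)).
have GP : forall L, _ := fun L => proj2_sig (constructive_indefinite_description _ (st L)).
pose acc := fix acc m := match m with 0%N => [::] | m'.+1 => acc m' ++ dirs (G (acc m')) end.
pose f m := G (acc m).
have acc_mono : forall m p, {subset acc m <= acc (m + p)%N}.
  move=> m; elim=> [|p IH] x; first by rewrite addn0.
  by rewrite addnS /= mem_cat => /IH ->.
have dsub : forall m p, {subset dirs (f m) <= acc (m.+1 + p)%N}.
  by move=> m p x hx; apply: acc_mono; rewrite /= mem_cat hx orbT.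
exists f; split; first by move=> t; exact: (GP (acc t)).1.
move=> s t hst heq; have [h1 h2] := equiv_cols heq.
case: (ltngtP s t) => [lst|lts|est]; last by apply: hst; rewrite est.
- have [_ [j hj]] := GP (acc t); have [i hi] := h1 j.
  move: hj; rewrite -/(f t) hi; apply/negP/negPn.
  by rewrite -(subnKC lst); apply: dsub; apply: in_dirs.
- have [_ [j hj]] := GP (acc s); have [i hi] := h2 j.
  move: hj; rewrite -/(f s) hi; apply/negP/negPn.
  by rewrite -(subnKC lts); apply: dsub; apply: in_dirs.
Qed.
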